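(* Consider the following insertion-only procedure for maintaining a coloring of a set $S$ of objects, where $S$ is partitioned into sets $S_0,\ldots,S_\ell$, $\ell=\lceil\log n\rceil$, each in one of the states empty, full, or in migration, and where for each $i$ there are $\ell-i+1$ color sets $C(i,t)$, $0\le t\le \ell-i$, each of $\gamma_{\mathrm{um}}(2^i)$ colors. To insert an object $s$: (1) let $i$ be the smallest index with $S_i$ empty (if $i=\ell+1$ a new set is introduced and $\ell$ is redefined); (2) set $S_i:=\{s\}\cup S_0\cup\cdots\cup S_{i-1}$, mark $S_0,\ldots,S_{i-1}$ empty and $S_i$ in migration; (3) take an unused color set $C(i,t)$ and compute a unimax coloring of $S_i$ with it, whose colors are called final colors; only $s$ is given its final color now; (4) for each set $S_k$ in migration, recolor to its final color one object of $S_k$ whose current color differs from its final color and whose final color is maximal among such objects; if all objects of $S_k$ now have their final color, mark $S_k$ full. Then whenever an object is inserted and the first empty set is $S_i$, the sets $S_0,\ldots,S_{i-1}$ are full.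
   Context: Initially $S$ is empty and all sets are empty. A unimax coloring of a set of objects (regions with respect to points, or points with respect to ranges) is a coloring by integers such that for every point (resp. range) $q$ related to at least one object, the maximum color among the objects related to $q$ is attained by exactly one of them. $\gamma_{\mathrm{um}}$ is a non-decreasing function such that every $m$ objects of the family admit a unimax coloring with $\gamma_{\mathrm{um}}(m)$ colors. *)

(* Defs.v *)
From mathcomp Require Import all_boot.
Set Implicit Arguments. Unset Strict Implicit. Unset Printing Implicit Defensive.

Inductive status := Empty | Full | Migration.

Section Unimax.
Variables (T : eqType) (Q : Type) (rel : Q -> T -> bool).

Definition unimax (X : seq T) (f : T -> nat) : Prop :=
  forall q, has (rel q) X ->
  exists x, [/\ x \in X, rel q x,
     (forall y, y \in X -> rel q y -> f y <= f x) &
     (forall y, y \in X -> rel q y -> f y = f x -> y = x)].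

Definition gamma_um_bound (gamma : nat -> nat) : Prop :=
  forall X : seq T, uniq X ->
  exists f, unimax X f /\ size (undup (map f X)) <= gamma (size X).

Record config := Config {
  ell : nat;                 (* sets S_0, ..., S_ell exist *)
  sets : nat -> seq T;
  state : nat -> status;
  col : T -> nat;
  fcol : T -> nat
}.

Definition in_S (c : config) (x : T) : Prop :=
  exists k, k <= ell c /\ x \in sets c k.

Definition first_empty (c : config) (i : nat) : Prop :=
  [/\ i <= (ell c).+1, (i <= ell c -> state c i = Empty) &
      forall j, j < i -> state c j <> Empty].

(* step (4) for one set X in migration, from colours col to col' *)
Definition recolor_one (X : seq T) (col fcol col' : T -> nat) : Prop :=
  ((forall x, x \in X -> col x = fcol x) /\ (forall x, x \in X -> col' x = col x))
  \/ exists x, [/\ x \in X, col x <> fcol x,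
        (forall y, y \in X -> col y <> fcol y -> fcol y <= fcol x),
        col' x = fcol x &
        forall y, y \in X -> y <> x -> col' y = col y].

Variable C : nat -> nat -> seq nat.

Definition insert_step (c : config) (s : T) (c' : config) : Prop :=
  ~ in_S c s /\
  exists i ell' t (g : T -> nat) (col' : T -> nat),
    let Si := s :: flatten [seq sets c j | j <- iota 0 i] in
    let sets' := fun j => if j < i then [::] else if j == i then Si
                          else if j <= ell c then sets c j else [::] in
    let st1 := fun j => if j < i then Empty else if j == i then Migration
                        else if j <= ell c then state c j else Empty in
    let fcol1 := fun x => if x \in Si then g x else fcol c x in
    let col1 := fun x => if x == s then g s else col c x in
    let st' := fun j => match st1 j with
                        | Migration => if all (fun x => col' x == fcol1 x) (sets' j)
                                       then Full else Migration
                        | st => st end in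
    [/\ first_empty c i,
        (* (1) a new set is introduced and ell redefined if i = ell+1 *)
        (i <= ell c -> ell' = ell c) /\ (i = (ell c).+1 -> i <= ell'),
        (* (3) an unused colour set C(i,t), unimax colouring of S_i with it *)
        [/\ t <= ell' - i,
            (forall x, in_S c x -> col c x \notin C i t),
            (forall x, x \in Si -> g x \in C i t) &
            unimax Si g],
        (* (4) each set in migration recolours one object *)
        (forall k, st1 k = Migration -> recolor_one (sets' k) col1 fcol1 col') /\
        (forall x, ~ (exists k, st1 k = Migration /\ x \in sets' k) ->
                   col' x = col1 x) &
        c' = Config ell' sets' st' col' fcol1].

Inductive reachable : config -> Prop :=
| reach_init ell0 col0 fcol0 :
    reachable (Config ell0 (fun _ => [::]) (fun _ => Empty) col0 fcol0)
| reach_step c s c' : reachable c -> insert_step c s c' -> reachable c'.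

End Unimax.

(* Main.v *)
Require Import Defs.
From mathcomp Require Import all_boot.
From mathcomp Require Import zify.
Set Implicit Arguments. Unset Strict Implicit. Unset Printing Implicit Defensive.

Lemma sumn_iotaS (f : nat -> nat) n :
  sumn [seq f j | j <- iota 0 n.+1] = sumn [seq f j | j <- iota 0 n] + f n.
Proof. by rewrite -addn1 iotaD map_cat sumn_cat /= addn0. Qed.

Lemma sum_pow2 n : (sumn [seq 2 ^ j | j <- iota 0 n]).+1 = 2 ^ n.
Proof.
elim: n => [//|n IH]; rewrite sumn_iotaS expnS.
have : 0 < 2 ^ n by rewrite expn_gt0. lia.
Qed.

Lemma recolor_aux (T : eqType) (X : seq T) (col fcol col' : T -> nat) x :
  col x != fcol x -> col' x = fcol x ->
  (forall y, y \in X -> y <> x -> col' y = col y) ->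
  count (fun x => col' x != fcol x) X + (x \in X)
  <= count (fun x => col x != fcol x) X.
Proof.
move=> cx c'x; elim: X => [//|y X IH] Hy /=.
have {}IH := IH (fun z zX => Hy z (mem_behead (s:=y::X) zX)).
rewrite inE; case: (eqVneq y x) => [->|yx].
  by rewrite c'x eqxx cx /=; lia.
rewrite Hy ?inE ?eqxx //; last by apply/eqP.
rewrite /=; lia.
Qed.

Lemma recolor_count (T : eqType) (X : seq T) (col fcol col' : T -> nat) :
  recolor_one X col fcol col' ->
  count (fun x => col' x != fcol x) X + has (fun x => col x != fcol x) X
  <= count (fun x => col x != fcol x) X.
Proof.
case=> [[H1 H2]|[x [xX cx _ c'x Hy]]].
  have -> : has (fun x => col x != fcol x) X = false.
    by apply/hasP => -[y /H1 ->]; rewrite eqxx.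
  rewrite addn0; apply: eq_leq; apply: eq_in_count => y yX.
  by rewrite H2.
have -> : has (fun x => col x != fcol x) X by apply/hasP; exists x => //; apply/eqP.
have := recolor_aux (X:=X) (introN eqP cx) c'x Hy; rewrite xX //.
Qed.

Definition stsize (st : status) k := if st is Empty then 0 else 2 ^ k.

Section Inv.
Variables (T : eqType) (Q : Type) (rel : Q -> T -> bool) (C : nat -> nat -> seq nat).

Definition wrong (c : config T) k := count (fun x => col c x != fcol c x) (sets c k).
Definition below (c : config T) k := sumn [seq size (sets c j) | j <- iota 0 k].

Definition Inv (c : config T) :=
  [/\ forall k, size (sets c k) = stsize (state c k) k,
      forall k, ell c < k -> sets c k = [::],
      forall k m x, x \in sets c k -> x \in sets c m -> k = m &
      forall k, state c k = Migration -> 0 < wrong c k /\ wrong c k + below c k < 2 ^ k].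

Lemma step_inv c s c' : Inv c -> insert_step rel C c s c' -> Inv c'.
Proof.
move=> [I1 I2 I3 I4] [Hns [i0 [ell' [t [g [col' H]]]]]].
cbv zeta in H.
case: H => fe [Hell1 Hell2] [Ht Hcol Hg Hum] [Hrec Hother] ->.
set Si := s :: _ in Hrec Hother Hum Hg *.
have Fs : forall k, s \notin sets c k.
  move=> k; case: (leqP k (ell c)) => hk; last by rewrite I2.
  by apply/negP => sk; apply: Hns; exists k.
have [fe1 fe2 fe3] := fe.
have F0 : sets c i0 = [::].
  case: (leqP i0 (ell c)) => h; last by rewrite I2.
  by apply/size0nil; rewrite I1 fe2.
have FSi : forall x, x \in Si -> x = s \/ exists2 j, j < i0 & x \in sets c j.
  move=> x; rewrite inE => /orP [/eqP ->|]; first by left.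
  move/flattenP => [X /mapP [j]]; rewrite mem_iota add0n => /andP [_ hj] -> xX.
  by right; exists j.
have Fbelow : forall j, j <= i0 -> (below c j).+1 = 2 ^ j.
  move=> j hj; rewrite -sum_pow2 /below; congr (_.+1).
  congr sumn; apply/eq_in_map => m; rewrite mem_iota add0n => /andP [_ hm].
  rewrite I1; case E: (state c m) => //; have := fe3 m; rewrite E; move=> /(_ _ erefl); lia.
have FsizeSi : size Si = (below c i0).+1.
  by rewrite /= size_flatten /below /shape -map_comp.
have notSi : forall k x, i0 < k -> x \in sets c k -> x \notin Si.
  move=> k x hk xk; apply/negP => /FSi [exs|[j hj xj]].
    by move: (Fs k); rewrite -exs xk.
  have := I3 _ _ _ xk xj; lia.
have B : forall d : config T, sets d = (fun j => if j < i0 then [::] else if j == i0 then Si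
                else if j <= ell c then sets c j else [::]) -> forall k, below d k
      = if k <= i0 then 0 else (below c k).+1.
  move=> d hd; elim=> [//|k IH].
  rewrite {1}/below sumn_iotaS -/(below d k) IH hd.
  have -> : below c k.+1 = below c k + size (sets c k) by rewrite /below sumn_iotaS.
  case: (ltngtP k i0) => hk //.
  - case: ifP => hl; first lia. rewrite I2 /=; lia.
  - subst k; rewrite FsizeSi F0 /=; lia.
have Fmem : forall k x, x \in (if k < i0 then [::] else if k == i0 then Si
                else if k <= ell c then sets c k else [::]) ->
     (k = i0 /\ x \in Si) \/ (i0 < k /\ x \in sets c k).
  move=> k x; case: ltnP => // h1; case: eqVneq => [->|h2]; first by left.
  case: ifP => // _ xk; right; split => //; lia.
have SiE : Si = s :: flatten [seq sets c j | j <- iota 0 i0] by [].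
clearbody Si.
split.
- move=> k /=; case: (ltnP k i0) => h1 //.
  case: eqVneq => [->|h2] /=.
    by rewrite -[X in X = _]/(size Si) FsizeSi Fbelow //; case: ifP.
  case: ifP => hk; last by [].
  by rewrite I1; case: (state c k) => //=; case: ifP.
- move=> k /= hk.
  have h0 : i0 <= ell'.
    case: (leqP i0 (ell c)) => h; first by rewrite Hell1.
    by apply: Hell2; lia.
  have h1 : ell c <= ell'.
    case: (leqP i0 (ell c)) => h; first by rewrite Hell1.
    have := Hell2; lia.
  have -> : (k < i0) = false by lia.
  have -> : (k == i0) = false by lia.
  have -> : (k <= ell c) = false by lia.
  by [].
- move=> k m x /= /Fmem hk /Fmem hm.
  case: hk => [[-> xS]|[hk xk]]; case: hm => [[-> xS']|[hm xm]] => //.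
  + by rewrite (negPf (notSi _ _ hm xm)) in xS.
  + by rewrite (negPf (notSi _ _ hk xk)) in xS'.
  + exact: I3 xk xm.
- move=> k; rewrite B // /wrong /=.
  case: (ltnP k i0) => h1 //=.
  case: (eqVneq k i0) => [ek|h2] /=.
  + subst k; rewrite leqnn; case: ifP => // hall _.
    have hrec := recolor_count (Hrec i0 ltac:(by rewrite ltnn eqxx)).
    rewrite ltnn eqxx in hrec.
    split.
      rewrite -has_count; apply/hasP; move/negbT: hall => /allPn [x xS hx].
      by exists x.
    rewrite addn0; have h := leq_trans (leq_addr _ _) hrec; apply: (leq_ltn_trans h).
    rewrite SiE /= eqxx -SiE (_ : s \in Si); last by rewrite SiE mem_head.
    rewrite eqxx /= add0n.
    apply: (leq_ltn_trans (count_size _ _)).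
    rewrite -Fbelow // -FsizeSi SiE /=; lia.
  + have hk : (k <= i0) = false by lia.
    rewrite hk; case: ifP => hl //.
    case Hst: (state c k) => //; case: ifP => // hall _.
    have [w1 w2] := I4 k Hst.
    have hrec := Hrec k.
    have hk' : (k < i0) = false by lia.
    rewrite hk' (negPf h2) hl Hst in hrec.
    have {}hrec := recolor_count (hrec erefl).
    have E : count (fun x => (if x == s then g s else col c x)
       != (if x \in Si then g x else fcol c x)) (sets c k) = wrong c k.
      apply: eq_in_count => x xk.
      have -> : (x == s) = false by apply/negP => /eqP ex; move: (Fs k); rewrite -ex xk.
      by rewrite (negPf (notSi k x ltac:(lia) xk)).
    rewrite E in hrec.
    have H1 : has (fun x => (if x == s then g s else col c x)
       != (if x \in Si then g x else fcol c x)) (sets c k).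
      by rewrite has_count E.
    rewrite H1 in hrec.
    split.
      rewrite -has_count; apply/hasP; move/negbT: hall => /allPn [x xS hx].
      by exists x.
    lia.
Qed.
End Inv.

Lemma reach_inv (T : eqType) (Q : Type) (rel : Q -> T -> bool) (C : nat -> nat -> seq nat)
  (c : config T) : reachable rel C c -> Inv c.
Proof.
elim=> [ell0 col0 fcol0|c0 s c1 _ IH hs]; last exact: step_inv IH hs.
split=> //= k; rewrite /wrong /below //=.
Qed.

Theorem mainTheorem8 (T : eqType) (Q : Type) (rel : Q -> T -> bool)
  (gamma : nat -> nat)
  (gamma_mono : forall m n, m <= n -> gamma m <= gamma n)
  (gamma_ok : gamma_um_bound rel gamma)
  (C : nat -> nat -> seq nat)
  (C_ok : forall i t, uniq (C i t) /\ size (C i t) = gamma (2 ^ i))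
  (c c' : config T) (s : T) (i : nat) :
  reachable rel C c -> insert_step rel C c s c' -> first_empty c i ->
  forall j, j < i -> state c j = Full.
Proof.
move=> /reach_inv [I1 I2 I3 I4] _ [fe1 fe2 fe3] j hj.
case E: (state c j) => //; first by have := fe3 j hj; rewrite E.
have [w1 w2] := I4 j E.
have hb : (below c j).+1 = 2 ^ j.
  rewrite -sum_pow2 /below; congr (_.+1).
  congr sumn; apply/eq_in_map => m; rewrite mem_iota add0n => /andP [_ hm].
  rewrite I1; case E': (state c m) => //; have := fe3 m; rewrite E'; move=> /(_ _ erefl); lia.
lia.
Qed.
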